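(* For every integer $n\ge3$ there exists an irreducible $\lambda$-quiddity of size $n$ over the ring $\mathbb{Z}\times\mathbb{Z}$.
   Context: For $a_1,\ldots,a_n$ in a commutative unital ring $A$, $M_n(a_1,\ldots,a_n)=\begin{pmatrix}a_n&-1\\1&0\end{pmatrix}\cdots\begin{pmatrix}a_1&-1\\1&0\end{pmatrix}$. An $n$-tuple $(a_1,\ldots,a_n)\in A^n$ is a $\lambda$-quiddity over $A$ (of size $n$) if $M_n(a_1,\ldots,a_n)=\pm\mathrm{Id}$. For $(a_1,\ldots,a_n)\in A^n$, $(b_1,\ldots,b_m)\in A^m$, define $(a_1,\ldots,a_n)\oplus(b_1,\ldots,b_m)=(a_1+b_m,a_2,\ldots,a_{n-1},a_n+b_1,b_2,\ldots,b_{m-1})$. Write $(a_1,\ldots,a_n)\sim(b_1,\ldots,b_n)$ if $(b_1,\ldots,b_n)$ is obtained from $(a_1,\ldots,a_n)$ or from $(a_n,\ldots,a_1)$ by a cyclic permutation. A $\lambda$-quiddity $(c_1,\ldots,c_n)$ with $n\ge3$ is reducible if there exist a $\lambda$-quiddity $(b_1,\ldots,b_l)$ and a tuple $(a_1,\ldots,a_m)$ with $l,m\ge3$ and $(c_1,\ldots,c_n)\sim(a_1,\ldots,a_m)\oplus(b_1,\ldots,b_l)$; it is irreducible otherwise. *)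

(* Defs.v *)
From HB Require Import structures.
From mathcomp Require Import all_boot all_order all_algebra.
Set Implicit Arguments. Unset Strict Implicit. Unset Printing Implicit Defensive.
Import GRing.Theory.
Local Open Scope ring_scope.

Definition ZxZ : comNzRingType := (int * int)%type.

Definition qmat (A : comNzRingType) (a : A) : 'M[A]_2 :=
  \matrix_(i < 2, j < 2)
    (if (val i == 0%N) && (val j == 0%N) then a
     else if (val i == 0%N) then -1
     else if (val j == 0%N) then 1 else 0).

(* M_n(a_1,...,a_n) = qmat a_n * ... * qmat a_1 *)
Fixpoint Mq (A : comNzRingType) (s : seq A) : 'M[A]_2 :=
  match s with
  | [::] => 1%:M
  | a :: s' => Mq s' *m qmat a
  end.

Definition lambda_quiddity (A : comNzRingType) (s : seq A) : Prop :=
  Mq s = 1%:M \/ Mq s = - 1%:M.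

(* (a_1..a_n) (+) (b_1..b_m) = (a_1+b_m, a_2,..,a_{n-1}, a_n+b_1, b_2,..,b_{m-1}) *)
Definition qoplus (A : comNzRingType) (a b : seq A) : seq A :=
  [:: nth 0 a 0 + last 0 b] ++ drop 1 (take (size a).-1 a)
  ++ [:: last 0 a + nth 0 b 0] ++ drop 1 (take (size b).-1 b).

Definition qsim (A : Type) (a b : seq A) : Prop :=
  exists k, b = rot k a \/ b = rot k (rev a).

Definition reducible_quiddity (A : comNzRingType) (c : seq A) : Prop :=
  lambda_quiddity c /\ (3 <= size c)%N /\
  exists (b a : seq A), lambda_quiddity b /\ (3 <= size b)%N /\ (3 <= size a)%N /\
    qsim c (qoplus a b).

Definition irreducible_quiddity (A : comNzRingType) (c : seq A) : Prop :=
  lambda_quiddity c /\ (3 <= size c)%N /\ ~ reducible_quiddity c.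

(* Main.v *)
Require Import Defs.
From HB Require Import structures.
From mathcomp Require Import all_boot all_order all_algebra zify ring.
Import GRing.Theory.
Local Open Scope ring_scope.

Definition fz (n i : nat) : int :=
  if i == 0%N then n%:Z - 2 else if i == 1%N then 1 else if i == n.-1 then 1 else 2.
Definition fx (n i : nat) : int := if (i < n)%N then fz n i else fz n (i - n).
Definition vx (n i : nat) : int :=
  if i == 0%N then 0 else if (i < n)%N then 1 else if i == n then 0
  else if (i < 2 * n)%N then -1 else 0.
Definition vy (n i : nat) : int :=
  if i == 0%N then -1 else if (i < n)%N then i%:Z else if i == n then 1
  else if (i < 2 * n)%N then - ((i - n)%N%:Z) else -1.

Ltac splitall := repeat (case: ifP => ?; try (exfalso; lia)).

Lemma rec_vx n i : (3 <= n)%N -> (1 <= i)%N -> (i < 2 * n)%N ->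
  vx n i.+1 = fx n i * vx n i.-1.+1 - vx n i.-1.
Proof. move=> *; rewrite /vx /fx /fz; splitall; lia. Qed.
Lemma rec_vx' n i : (3 <= n)%N -> (1 <= i)%N -> (i < 2 * n)%N ->
  vx n i.+1 = fx n i * vx n i - vx n i.-1.
Proof. move=> *; rewrite /vx /fx /fz; splitall; lia. Qed.
Lemma rec_vy n i : (3 <= n)%N -> (1 <= i)%N -> (i < 2 * n)%N ->
  vy n i.+1 = fx n i * vy n i - vy n i.-1.
Proof. move=> *; rewrite /vy /fx /fz; splitall; lia. Qed.
Lemma det_v n i : (3 <= n)%N -> (1 <= i)%N -> (i <= 2 * n)%N ->
  vx n i * vy n i.-1 - vy n i * vx n i.-1 = -1.
Proof. move=> *; rewrite /vy /vx; splitall; lia. Qed.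
Lemma anti_v n i : (3 <= n)%N -> (1 <= i)%N -> (i <= n)%N ->
  vx n (i + n) = - vx n i /\ vy n (i + n) = - vy n i.
Proof. move=> *; rewrite /vy /vx; splitall; lia. Qed.
Definition det1 n p q := vx n p * vy n q - vy n p * vx n q.
Lemma G n p k : (3 <= n)%N -> (p <= n)%N -> (2 <= k)%N -> (k <= n - 2)%N ->
  1 <= det1 n p (p + k) /\ (det1 n p (p + k) = 1 -> p = 0%N \/ p = n \/ (p + k = n)%N).
Proof. move=> *; rewrite /det1 /vy /vx; splitall; lia. Qed.

Set Implicit Arguments. Unset Strict Implicit.
Section Gen.
Variable A : comNzRingType.
Implicit Types (X Y : nat -> A).

Lemma big_ord2 (F : 'I_2 -> A) : \sum_(i < 2) F i = F ord0 + F (lift ord0 ord0).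
Proof. by rewrite !big_ord_recl big_ord0 addr0. Qed.

Definition Smx X Y (i : nat) : 'M[A]_2 := \matrix_(a < 2, b < 2)
  if val a == 0%N then (if val b == 0%N then X i else Y i)
  else (if val b == 0%N then X i.-1 else Y i.-1).
Definition Amx X Y (i : nat) : 'M[A]_2 := \matrix_(a < 2, b < 2)
  if val a == 0%N then (if val b == 0%N then Y i.-1 else - Y i)
  else (if val b == 0%N then - X i.-1 else X i).

Lemma step (h : A) X Y i : X i.+1 = h * X i - X i.-1 -> Y i.+1 = h * Y i - Y i.-1 ->
  qmat h *m Smx X Y i = Smx X Y i.+1.
Proof.
move=> hX hY; apply/matrixP => a b; rewrite !mxE big_ord2 !mxE /=.
case: a => [[|[|//]]] ? ; case: b => [[|[|//]]] ? /=; rewrite ?hX ?hY; ring.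
Qed.

Lemma adjS X Y i : Smx X Y i *m Amx X Y i = (X i * Y i.-1 - Y i * X i.-1)%:M.
Proof.
apply/matrixP => a b; rewrite !mxE big_ord2 !mxE /=.
case: a => [[|[|//]]] ? ; case: b => [[|[|//]]] ? /=; ring.
Qed.

Fixpoint blk (h : nat -> A) j L : seq A :=
  if L is L'.+1 then h j :: blk h j.+1 L' else [::].

Lemma size_blk h j L : size (blk h j L) = L.
Proof. by elim: L j => //= L IH j; rewrite IH. Qed.

Lemma nth_blk h j L i : (i < L)%N -> nth 0 (blk h j L) i = h (j + i)%N.
Proof.
elim: L j i => // L IH j [|i] /= hi; first by rewrite addn0.
by rewrite IH // addSnnS.
Qed.

Lemma lemA h X Y j L :
  (forall i, (j <= i)%N -> (i < j + L)%N ->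
     X i.+1 = h i * X i - X i.-1 /\ Y i.+1 = h i * Y i - Y i.-1) ->
  Mq (blk h j L) *m Smx X Y j = Smx X Y (j + L).
Proof.
elim: L j => [|L IH] j hr /=; first by rewrite mul1mx addn0.
have hj : (j < j + L.+1)%N by rewrite addnS ltnS leq_addr.
case: (hr j (leqnn _) hj) => e1 e2.
rewrite -mulmxA step //.
rewrite IH ?addSnnS // => i hi1 hi2; apply: hr => //; exact: ltnW.

Qed.

Lemma entry00 w X Y p q : Mq w *m Smx X Y p = Smx X Y q ->
  Mq w 0 0 * (X p * Y p.-1 - Y p * X p.-1) = X q * Y p.-1 - Y q * X p.-1.
Proof.
move=> e; have := congr1 (fun M => (M *m Amx X Y p) 0 0) e => /=.
rewrite -mulmxA adjS mul_mx_scalar !mxE big_ord2 !mxE /= mulrC => ->; ring.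
Qed.

Lemma Mq_rcons (s : seq A) (x : A) : Mq (rcons s x) = qmat x *m Mq s.
Proof.
elim: s => [|y s IH] /=; first by rewrite mul1mx mulmx1.
by rewrite IH mulmxA.
Qed.

Lemma Mq_cat (s t : seq A) : Mq (s ++ t) = Mq t *m Mq s.
Proof. elim: s => [|y s IH] /=; first by rewrite mulmx1. by rewrite IH mulmxA. Qed.

Definition Dm : 'M[A]_2 := \matrix_(a < 2, b < 2)
  if val a == val b then (if val a == 0%N then 1 else -1) else 0.

Lemma DmK : Dm *m Dm = 1%:M.
Proof.
apply/matrixP => a b; rewrite !mxE big_ord2 !mxE /=.
case: a => [[|[|//]]] ? ; case: b => [[|[|//]]] ? /=; ring.
Qed.

Lemma Dq (x : A) : Dm *m (qmat x)^T *m Dm = qmat x.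
Proof.
apply/matrixP => a b; rewrite !mxE !big_ord2 !mxE !big_ord2 !mxE /=.
case: a => [[|[|//]]] ? ; case: b => [[|[|//]]] ? /=; ring.
Qed.

Lemma Mq_rev (s : seq A) : Mq (rev s) = Dm *m (Mq s)^T *m Dm.
Proof.
elim: s => [|x s IH] /=; first by rewrite trmx1 mulmx1 DmK.
rewrite rev_cons Mq_rcons IH trmx_mul -{1}Dq.
rewrite !mulmxA -(mulmxA _ Dm Dm) DmK mulmx1; done.
Qed.

Lemma Mq_rev00 (s : seq A) : Mq (rev s) 0 0 = Mq s 0 0.
Proof.
rewrite Mq_rev !mxE !big_ord2 !mxE !big_ord2 !mxE /=; ring.
Qed.

Definition Qi (a : A) : 'M[A]_2 := \matrix_(i < 2, j < 2)
  if val i == 0%N then (if val j == 0%N then 0 else 1)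
  else (if val j == 0%N then -1 else a).

Lemma Qiq a : Qi a *m qmat a = 1%:M.
Proof.
apply/matrixP => i j; rewrite !mxE big_ord2 !mxE /=.
case: i => [[|[|//]]] ? ; case: j => [[|[|//]]] ? /=; ring.
Qed.
Lemma qQi a : qmat a *m Qi a = 1%:M.
Proof.
apply/matrixP => i j; rewrite !mxE big_ord2 !mxE /=.
case: i => [[|[|//]]] ? ; case: j => [[|[|//]]] ? /=; ring.
Qed.

Lemma mid00 (b1 bl : A) (s : seq A) : lambda_quiddity (b1 :: rcons s bl) ->
  Mq s 0 0 = 1 \/ Mq s 0 0 = -1.
Proof.
rewrite /lambda_quiddity /= Mq_rcons.
have key : Mq s = Qi bl *m (qmat bl *m Mq s *m qmat b1) *m Qi b1.
  by rewrite !mulmxA Qiq mul1mx -mulmxA qQi mulmx1.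
case=> e; rewrite key e; [right|left];
rewrite ?mulNmx ?mulmxN ?mulmx1 ?mxE !big_ord2 !mxE /=; ring.
Qed.

End Gen.

Lemma fst_mul (x y : ZxZ) : (x * y).1 = x.1 * y.1. Proof. by []. Qed.
Lemma snd_mul (x y : ZxZ) : (x * y).2 = x.2 * y.2. Proof. by []. Qed.
Lemma fst_sub (x y : ZxZ) : (x - y).1 = x.1 - y.1. Proof. by []. Qed.
Lemma snd_sub (x y : ZxZ) : (x - y).2 = x.2 - y.2. Proof. by []. Qed.
Lemma fst_opp (x : ZxZ) : (- x).1 = - x.1. Proof. by []. Qed.
Lemma snd_opp (x : ZxZ) : (- x).2 = - x.2. Proof. by []. Qed.

Definition F n i : ZxZ := (fz n i, fz n (if i == 0%N then n.-1 else i.-1)).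
Definition cseq n : seq ZxZ := mkseq (F n) n.
Definition hx n i : ZxZ := (fx n i, fx n i.-1).
Definition Xv n i : ZxZ := (vx n i, vx n i.-1).
Definition Yv n i : ZxZ := (vy n i, vy n i.-1).

Lemma Fhx n r y : (3 <= n)%N -> (r < n)%N -> (1 <= y)%N -> (y < 2 * n)%N ->
  (y = r \/ y = r + n)%N -> F n r = hx n y.
Proof.
move=> h1 h2 h3 h4 h5; rewrite /F /hx /fx; congr (_, _); splitall; congr (fz n _); lia.
Qed.

Lemma recXY n i : (3 <= n)%N -> (2 <= i)%N -> (i < 2 * n)%N ->
  Xv n i.+1 = hx n i * Xv n i - Xv n i.-1 /\ Yv n i.+1 = hx n i * Yv n i - Yv n i.-1.
Proof.
move=> h1 h2 h3.
have e : i.-1.+1 = i by lia.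
have a1 : vx n i.+1 = fx n i * vx n i - vx n i.-1 by apply: rec_vx'; lia.
have a2 : vx n i = fx n i.-1 * vx n i.-1 - vx n i.-1.-1.
  by rewrite -{1}e; apply: rec_vx'; lia.
have b1 : vy n i.+1 = fx n i * vy n i - vy n i.-1 by apply: rec_vy; lia.
have b2 : vy n i = fx n i.-1 * vy n i.-1 - vy n i.-1.-1.
  by rewrite -{1}e; apply: rec_vy; lia.
split; rewrite /Xv /Yv /hx.
  transitivity ((fx n i * vx n i - vx n i.-1, fx n i.-1 * vx n i.-1 - vx n i.-1.-1) : ZxZ); last by [].
  by congr (_, _).
transitivity ((fx n i * vy n i - vy n i.-1, fx n i.-1 * vy n i.-1 - vy n i.-1.-1) : ZxZ); last by [].
by congr (_, _).
Qed.

Lemma dS n j : (3 <= n)%N -> (2 <= j)%N -> (j <= 2 * n)%N ->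
  Xv n j * Yv n j.-1 - Yv n j * Xv n j.-1 = -1.
Proof.
move=> h1 h2 h3.
transitivity ((vx n j * vy n j.-1 - vy n j * vx n j.-1,
   vx n j.-1 * vy n j.-1.-1 - vy n j.-1 * vx n j.-1.-1) : ZxZ); first by [].
rewrite det_v ?det_v //; lia.
Qed.

Lemma blkgood n j L : (3 <= n)%N -> (2 <= j)%N -> (j <= n.+1)%N -> (1 <= L)%N -> (L <= n - 3)%N ->
  Mq (blk (hx n) j L) 0 0 <> 1 /\ Mq (blk (hx n) j L) 0 0 <> -1.
Proof.
move=> h1 h2 h3 h4 h5.
have E : Mq (blk (hx n) j L) *m Smx (Xv n) (Yv n) j = Smx (Xv n) (Yv n) (j + L).
  by apply: lemA => i hi1 hi2; apply: recXY; lia.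
move/entry00: E; rewrite dS //; last by lia.
set M := Mq _ 0 0 => E.
have E1 := congr1 fst E; have E2 := congr1 snd E.
rewrite /= ?fst_sub ?fst_mul ?snd_sub ?snd_mul /= in E1 E2.
have [a1 [b1 c1]] : (j.-1 <= n)%N /\ (2 <= L.+1)%N /\ (L.+1 <= n-2)%N by lia.
have [g1 g1'] := G n j.-1 L.+1 h1 a1 b1 c1.
have [a2 [b2 c2]] : (j.-2 <= n)%N /\ (2 <= L.+1)%N /\ (L.+1 <= n-2)%N by lia.
have [g2 g2'] := G n j.-2 L.+1 h1 a2 b2 c2.
rewrite /det1 (_ : (j.-1 + L.+1 = j + L)%N) in g1 g1'; last by lia.
rewrite /det1 (_ : (j.-2 + L.+1 = (j + L).-1)%N) in g2 g2'; last by lia.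
split=> eM.
  rewrite eM /= in E1 E2.
  have /g1' : vx n j.-1 * vy n (j + L) - vy n j.-1 * vx n (j + L) = 1 by lia.
  have /g2' : vx n j.-1.-1 * vy n (j + L).-1 - vy n j.-1.-1 * vx n (j + L).-1 = 1.
    lia.
  lia.
rewrite eM /= in E1; lia.
Qed.

Lemma cseq_blk n : (3 <= n)%N -> cseq n = blk (hx n) n n.
Proof.
move=> h1; apply: (@eq_from_nth _ 0); first by rewrite size_mkseq size_blk.
move=> i; rewrite size_mkseq => hi; rewrite nth_mkseq // nth_blk //.
apply: Fhx; lia.
Qed.

Lemma XYanti n i : (3 <= n)%N -> (2 <= i)%N -> (i <= n)%N ->
  Xv n (i + n) = - Xv n i /\ Yv n (i + n) = - Yv n i.
Proof.
move=> h1 h2 h3.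
have [a1 b1] : vx n (i + n) = - vx n i /\ vy n (i + n) = - vy n i by apply: anti_v; lia.
have [a2 b2] : vx n (i.-1 + n) = - vx n i.-1 /\ vy n (i.-1 + n) = - vy n i.-1 by apply: anti_v; lia.
have e : (i + n).-1 = (i.-1 + n)%N by lia.
rewrite /Xv /Yv e a1 a2 b1 b2; split; by [].
Qed.

Lemma scN1 : ((-1 : ZxZ)%:M : 'M[ZxZ]_2) = - 1%:M.
Proof. by apply/matrixP => i j; rewrite !mxE mulNrn. Qed.

Lemma c_quid n : (3 <= n)%N -> lambda_quiddity (cseq n).
Proof.
move=> h1; right.
have E : Mq (blk (hx n) n n) *m Smx (Xv n) (Yv n) n = Smx (Xv n) (Yv n) (n + n).
  by apply: lemA => i hi1 hi2; apply: recXY; lia.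
have [x1 y1] : Xv n (n + n) = - Xv n n /\ Yv n (n + n) = - Yv n n by apply: XYanti; lia.
have [x2 y2] : Xv n (n.-1 + n) = - Xv n n.-1 /\ Yv n (n.-1 + n) = - Yv n n.-1.
  by apply: XYanti; lia.
have SN : Smx (Xv n) (Yv n) (n + n) = - Smx (Xv n) (Yv n) n.
  apply/matrixP => a b; rewrite !mxE.
  have e : (n + n).-1 = (n.-1 + n)%N by lia.
  rewrite e x1 x2 y1 y2.
  by case: a => [[|[|//]]] ? ; case: b => [[|[|//]]] ? /=.
rewrite SN in E.
have := congr1 (fun M => M *m Amx (Xv n) (Yv n) n) E => /=.
rewrite -mulmxA mulNmx adjS dS //; try lia.
rewrite -cseq_blk // => H.
by move: H; rewrite scN1 mulmxN mulmx1 opprK => <-; rewrite opprK.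
Qed.

Lemma nth_rot' (T : Type) (d : T) (s : seq T) k i : (i < size s)%N ->
  nth d (rot k s) i = nth d s (if (k < size s)%N then
     (if (i + k < size s)%N then (i + k)%N else (i + k - size s)%N) else i).
Proof.
move=> hi; case: (ltnP k (size s)) => hk; last by rewrite rot_oversize.
rewrite /rot nth_cat size_drop; case: ifP => h1.
  by rewrite nth_drop ifT; [congr nth; lia | lia].
rewrite nth_take; last by lia.
by rewrite ifF; [congr nth; lia | apply/negbTE; lia].
Qed.

Lemma splitb (A : comNzRingType) (b : seq A) : (2 <= size b)%N ->
  b = nth 0 b 0 :: rcons (drop 1 (take (size b).-1 b)) (last 0 b).
Proof.
case: b => [|x s] //=; case/lastP: s => [|s y] //= h.
by rewrite size_rcons /= drop0 last_rcons -cats1 take_size_cat // cats1.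
Qed.

Theorem corollary2p9 :
  forall n : nat, (3 <= n)%N ->
    exists c : seq ZxZ, size c = n /\ irreducible_quiddity c.
Proof.
move=> n hn; exists (cseq n); split; first by rewrite size_mkseq.
split; first exact: c_quid. split; first by rewrite size_mkseq.
case=> _ [_ [b [a [hb [hsb [hsa [k hk]]]]]]].
set bm := drop 1 (take (size b).-1 b).
set am := drop 1 (take (size a).-1 a).
have h2b : (2 <= size b)%N by lia.
rewrite (splitb h2b) -/bm in hb.
have m00 := mid00 hb.
have sbm : size bm = (size b - 2)%N by rewrite size_drop size_take; case: ifP; lia.
have sam : size am = (size a - 2)%N by rewrite size_drop size_take; case: ifP; lia.
have heq : qoplus a b = (nth 0 a 0 + last 0 b :: am ++ [:: last 0 a + nth 0 b 0]) ++ bm.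
  by rewrite /qoplus /= -catA.
have sp : size (nth 0 a 0 + last 0 b :: am ++ [:: last 0 a + nth 0 b 0]) = size a.
  rewrite /= size_cat sam /= addn1 -addn2 subnK //; exact: ltnW.
have sq : size (qoplus a b) = n.
  by case: hk => ->; rewrite size_rot ?size_rev size_mkseq.
have sq' := sq; rewrite heq size_cat sp sbm in sq'.
set L := (size b - 2)%N in sbm sq' m00 hb.
have hL1 : (1 <= L)%N by rewrite /L; lia.
have hL2 : (L <= n - 3)%N by lia.
clearbody L.
have nbm : forall i, (i < L)%N -> nth 0 bm i = nth 0 (qoplus a b) (size a + i).
  move=> i hi; rewrite heq nth_cat sp ifF; last by apply/negbTE; lia.
  congr nth; lia.
have [j [hj1 [hj2 hj3]]] : exists j, (2 <= j)%N /\ (j <= n.+1)%N /\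
    (bm = blk (hx n) j L \/ rev bm = blk (hx n) j L).
  have [t [htn ht]] : exists t, (t < n)%N /\ forall s : seq ZxZ, size s = n -> rot k s = rot t s.
    case: (ltnP k n) => hkn; [exists k | exists 0%N]; (split; [lia | move=> s hs]) => //.
    by rewrite rot0 rot_oversize // hs.
  case: hk => hk.
    rewrite ht ?size_mkseq // in hk.
    exists (if (t + size a < n + 2)%N
            then (t + size a)%N
            else (t + size a - n)%N).
    split; first by splitall; lia. split; first by splitall; lia.
    left; apply: (@eq_from_nth _ 0); first by rewrite size_blk.
    move=> i; rewrite sbm => hi; rewrite nbm // hk nth_rot' size_mkseq; last by lia.
    rewrite htn.
    rewrite nth_mkseq; last by splitall; lia.
    rewrite nth_blk //; apply: Fhx => //; splitall; lia.
  rewrite ht ?size_rev ?size_mkseq // in hk.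
  exists (if (n - t < 2)%N
            then (2 * n - t)%N
            else (n - t)%N).
  split; first by splitall; lia. split; first by splitall; lia.
  right; apply: (@eq_from_nth _ 0); first by rewrite size_rev size_blk.
  move=> i; rewrite size_rev sbm => hi; rewrite nth_rev sbm //.
  rewrite nbm; last by lia.
  rewrite hk nth_rot' size_rev size_mkseq; last by lia.
  rewrite htn.
  rewrite nth_rev size_mkseq; last by splitall; lia.
  rewrite nth_mkseq; last by splitall; lia.
  rewrite nth_blk //; apply: Fhx => //; splitall; lia.
have [g1 g2] := blkgood hn hj1 hj2 hL1 hL2.
case: hj3 => e.
  by rewrite -e in g1 g2; case: m00.
rewrite -e Mq_rev00 in g1 g2; by case: m00.
Qed.
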